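(* Let $A$ be a real $n\times n$ matrix with strictly negative diagonal entries and clique complex $X(G_A)$. Suppose $\det A_\sigma=0$ for every clique $\sigma\in X(G_A)$ with $|\sigma|=2$ or $|\sigma|=3$. Then the sign matrix $\mathcal{E}_A$ is symmetric, and $A_{ii}A_{jj}=A_{ij}A_{ji}$ for every clique $\{i,j\}\in X(G_A)$ with $i\ne j$, and $A_{ii}A_{jj}A_{kk}=A_{ij}A_{jk}A_{ki}$ for every clique $\{i,j,k\}\in X(G_A)$ with $i,j,k$ distinct. (In particular $A_{ij}\neq0$ for every edge $(ij)$ of $G_A$.)
   Context: The sign matrix $\mathcal{E}_A$ has entries equal to the signs ($1,-1,0$) of the entries of $A$. The connectivity graph $G_A$ is the simple graph on $\{1,\dots,n\}$ containing edge $(ij)$, $i\ne j$, unless $A_{ij}=A_{ji}=0$; $X(G_A)$ is the set of its cliques (sets of pairwise adjacent vertices). $A_\sigma$ denotes the principal submatrix of $A$ on index set $\sigma$. *)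

(* Defs.v *)
From HB Require Import structures.
From mathcomp Require Import all_boot all_order all_algebra.
Set Implicit Arguments. Unset Strict Implicit. Unset Printing Implicit Defensive.
Import Order.TTheory GRing.Theory Num.Theory.
Local Open Scope ring_scope.

Definition sign_mx (R : realFieldType) (n : nat) (A : 'M[R]_n) : 'M[R]_n :=
  \matrix_(i, j) Num.sg (A i j).

Definition adjA (R : realFieldType) (n : nat) (A : 'M[R]_n) (i j : 'I_n) : bool :=
  (i != j) && ((A i j != 0) || (A j i != 0)).

Definition is_clique (R : realFieldType) (n : nat) (A : 'M[R]_n) (s : {set 'I_n}) : bool :=
  [forall i in s, forall j in s, (i != j) ==> adjA A i j].

(* Principal submatrix A_sigma, indexed by the increasing enumeration of sigma. *)
Definition principal_submx (R : realFieldType) (n : nat) (A : 'M[R]_n) (s : {set 'I_n})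
  : 'M[R]_#|s| :=
  \matrix_(i, j) A (enum_val i) (enum_val j).

(* Main.v *)
Require Import Defs.
From HB Require Import structures.
From mathcomp Require Import all_boot all_order all_algebra.
Import Order.TTheory GRing.Theory Num.Theory.
Local Open Scope ring_scope.

Lemma det2 (R : comNzRingType) (F : nat -> nat -> R) :
  \det (\matrix_(x < 2, y < 2) F (val x) (val y)) = F 0 0 * F 1 1 - F 0 1 * F 1 0.
Proof.
rewrite (expand_det_row _ 0) !big_ord_recl big_ord0 /cofactor !det_mx11 !mxE /bump /=.
by rewrite expr0 expr1 !mul1r addr0 mulN1r mulrN.
Qed.

Lemma det3 (R : comNzRingType) (F : nat -> nat -> R) :
  \det (\matrix_(x < 3, y < 3) F (val x) (val y)) =
  F 0 0 * (F 1 1 * F 2 2 - F 1 2 * F 2 1) - F 0 1 * (F 1 0 * F 2 2 - F 1 2 * F 2 0)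
  + F 0 2 * (F 1 0 * F 2 1 - F 1 1 * F 2 0).
Proof.
rewrite (expand_det_row _ 0) !big_ord_recl big_ord0 /cofactor.
rewrite !(expand_det_row _ 0) !big_ord_recl !big_ord0 /cofactor !det_mx11 !mxE /bump /=.
rewrite ?expr0 ?expr1 ?mul1r ?addr0 ?mulN1r ?mulrN ?sqrrN ?expr1n ?mul1r ?opprK ?mulr1.
by rewrite /bump /= addrA.
Qed.

Lemma quad (R : idomainType) (P Q d : R) : P + Q = d + d -> P * Q = d * d -> P = d.
Proof.
move=> hs hp.
have hq : Q = d + d - P by rewrite -hs addrC addKr.
have : (P - d) * (P - d) = 0.
  transitivity (d * d - P * Q); last by rewrite hp subrr.
  rewrite hq mulrBl !mulrBr mulrDr (mulrC d P).
  rewrite !opprB !opprD ?opprK !addrA [RHS]addrC !addrA.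
  by rewrite (addrAC (P*P)) [- (P*d) + _]addrC (addrAC (d*d)) (addrC (d*d)).
by move/eqP; rewrite mulf_eq0 orbb subr_eq0 => /eqP.
Qed.
Lemma tri (R : idomainType) (a b c p p' q q' r r' : R) :
 p * p' = a * b -> q * q' = b * c -> r * r' = c * a ->
 a * (b * c - q * q') - p * (p' * c - q * r) + r' * (p' * q' - b * r) = 0 ->
 p * q * r = a * b * c /\ r' * q' * p' = a * b * c.
Proof.
move=> hp hq hr hdet.
have hPQ : p * q * r * (r' * q' * p') = a * b * c * (a * b * c).
  rewrite (AC (3*3) (((1*6)*(2*5))*(3*4))) /= hp hq hr.
  by rewrite [RHS](AC (3*3) (((1*2)*(5*3))*(6*4))).
have hS : p * q * r + r' * q' * p' = a * b * c + a * b * c.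
  rewrite hq subrr mulr0 sub0r !mulrBr !mulrA hp in hdet.
  rewrite (mulrAC r' b r) -(mulrA r') (mulrC r' r) hr in hdet.
  rewrite (mulrC p' q') mulrA [c * a * b](AC 3 ((2*3)*1)) /= in hdet.
  by move/eqP: hdet; rewrite opprB addrACA -opprD subr_eq0 => /eqP.
split; first exact: quad hS hPQ.
apply: (@quad _ _ (p * q * r)). by rewrite addrC. by rewrite mulrC.
Qed.

Lemma det_sub2 (R : comNzRingType) n (A : 'M[R]_n) m (f : 'I_m -> 'I_n) : m = 2%N ->
  exists x0 x1 : 'I_m, x0 != x1 /\ \det (\matrix_(x, y) A (f x) (f y)) =
    A (f x0) (f x0) * A (f x1) (f x1) - A (f x0) (f x1) * A (f x1) (f x0).
Proof.
move=> hm; subst m; exists 0, 1; split => //.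
have -> : \matrix_(x, y) A (f x) (f y) =
   \matrix_(x < 2, y < 2) (fun a b => A (f (inord a)) (f (inord b))) (val x) (val y).
  by apply/matrixP => x y; rewrite !mxE !inord_val.
rewrite (@det2 _ (fun a b => A (f (inord a)) (f (inord b)))).
have e0 : inord 0 = (0 : 'I_2) by apply/val_inj; rewrite /= inordK.
have e1 : inord 1 = (1 : 'I_2) by apply/val_inj; rewrite /= inordK.
by rewrite e0 e1.
Qed.

Lemma det_sub3 (R : comNzRingType) n (A : 'M[R]_n) m (f : 'I_m -> 'I_n) : m = 3%N ->
  exists x0 x1 x2 : 'I_m, [/\ x0 != x1, x1 != x2, x0 != x2 &
    let F a b := A (f a) (f b) in
    \det (\matrix_(x, y) A (f x) (f y)) =
  F x0 x0 * (F x1 x1 * F x2 x2 - F x1 x2 * F x2 x1) - F x0 x1 * (F x1 x0 * F x2 x2 - F x1 x2 * F x2 x0)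
  + F x0 x2 * (F x1 x0 * F x2 x1 - F x1 x1 * F x2 x0)].
Proof.
move=> hm; subst m; exists 0, 1, 2; split => //.
have -> : \matrix_(x, y) A (f x) (f y) =
   \matrix_(x < 3, y < 3) (fun a b => A (f (inord a)) (f (inord b))) (val x) (val y).
  by apply/matrixP => x y; rewrite !mxE !inord_val.
rewrite (@det3 _ (fun a b => A (f (inord a)) (f (inord b)))).
have e0 : inord 0 = (0 : 'I_3) by apply/val_inj; rewrite /= inordK.
have e1 : inord 1 = (1 : 'I_3) by apply/val_inj; rewrite /= inordK.
have e2 : inord 2 = (2 : 'I_3) by apply/val_inj; rewrite /= inordK.
by rewrite e0 e1 e2.
Qed.

Lemma adjC (R : realFieldType) n (A : 'M[R]_n) i j : adjA A i j = adjA A j i.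
Proof. by rewrite /adjA eq_sym orbC. Qed.

Lemma clique_adj (R : realFieldType) n (A : 'M[R]_n) s x y :
  is_clique A s -> x \in s -> y \in s -> x != y -> adjA A x y.
Proof.
by move=> /forallP/(_ x)/implyP hc hx hy hxy; move: (hc hx) => /forallP/(_ y)/implyP/(_ hy)/implyP; apply.
Qed.

Lemma pair2 (R : realFieldType) n (A : 'M[R]_n)
  (hdet : forall s : {set 'I_n}, is_clique A s ->
            (#|s| == 2)%N || (#|s| == 3)%N -> \det (principal_submx A s) = 0)
  i j : adjA A i j -> A i i * A j j = A i j * A j i.
Proof.
move=> hij; have hne : i != j by case/andP: hij.
set s := [set i; j].
have hcl : is_clique A s.
  apply/forallP => x; apply/implyP => hx; apply/forallP => y; apply/implyP => hy.
  apply/implyP => hxy.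
  by case/set2P: hx hxy => ->; case/set2P: hy => -> //; rewrite ?eqxx // adjC.
have hc : #|s| = 2%N by rewrite cards2 hne.
have hc2 : (#|s| == 2)%N || (#|s| == 3)%N by rewrite hc.
have := hdet s hcl hc2; rewrite /principal_submx.
have [x0 [x1 [hx01 ->]]] := @det_sub2 _ _ A _ (@enum_val _ (mem s)) hc.
move/eqP; rewrite subr_eq0 => /eqP.
have hu := enum_valP x0; have hv := enum_valP x1.
have huv : enum_val x0 != enum_val x1 :> 'I_n.
  by apply: contra hx01 => /eqP /enum_val_inj ->.
move: huv.
case/set2P: hu => ->; case/set2P: hv => -> //; rewrite ?eqxx // => _.
by move=> h; rewrite mulrC h mulrC.
Qed.

Lemma m3a (R : comNzRingType) (x y z : R) : x * y * z = y * z * x.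
Proof. by rewrite -mulrA mulrC. Qed.
Lemma m3b (R : comNzRingType) (x y z : R) : x * y * z = z * x * y.
Proof. by rewrite m3a m3a. Qed.
Lemma m3c (R : comNzRingType) (x y z : R) : x * y * z = x * z * y.
Proof. exact: mulrAC. Qed.
Lemma m3d (R : comNzRingType) (x y z : R) : x * y * z = y * x * z.
Proof. by rewrite (mulrC x). Qed.
Lemma m3e (R : comNzRingType) (x y z : R) : x * y * z = z * y * x.
Proof. by rewrite m3b mulrAC. Qed.

Ltac p3 := first [ reflexivity | exact: m3a | exact: m3b | exact: m3c | exact: m3d | exact: m3e ].

Lemma final3 (R : comNzRingType) n (A : 'M[R]_n) (u v w i j k : 'I_n) :
  u != v -> v != w -> u != w ->
  u \in [set i; j; k] -> v \in [set i; j; k] -> w \in [set i; j; k] ->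
  A u v * A v w * A w u = A u u * A v v * A w w ->
  A u w * A w v * A v u = A u u * A v v * A w w ->
  A i i * A j j * A k k = A i j * A j k * A k i.
Proof.
move=> huv hvw huw hu hv hw H1 H2.
move: hu hv hw huv hvw huw H1 H2; rewrite !inE.
move=> /orP [/orP [] | ] /eqP -> /orP [/orP [] | ] /eqP -> /orP [/orP [] | ] /eqP ->;
  rewrite ?eqxx // => _ _ _ H1 H2;
  (match type of H1 with _ = ?d => transitivity d end;
  [ p3 | first [ rewrite -H1; p3 | rewrite -H2; p3 ] ]).
Qed.

Theorem mainTheorem9 (R : realFieldType) (n : nat) (A : 'M[R]_n)
  (hdiag : forall i : 'I_n, A i i < 0)
  (hdet : forall s : {set 'I_n}, is_clique A s ->
            (#|s| == 2)%N || (#|s| == 3)%N -> \det (principal_submx A s) = 0) :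
  (sign_mx A)^T = sign_mx A /\
  (forall i j : 'I_n, i != j -> is_clique A [set i; j] ->
     A i i * A j j = A i j * A j i) /\
  (forall i j k : 'I_n, i != j -> j != k -> i != k -> is_clique A [set i; j; k] ->
     A i i * A j j * A k k = A i j * A j k * A k i) /\
  (forall i j : 'I_n, adjA A i j -> A i j != 0).
Proof.
have P2 := @pair2 R n A hdet.
have nz : forall i j, adjA A i j -> 0 < A i j * A j i.
  by move=> i j hij; rewrite -P2 // nmulr_rgt0.
split.
  apply/matrixP => x y; rewrite !mxE.
  case: (boolP (adjA A x y)) => hxy.
    have := nz x y hxy; case: (ltgtP (A x y) 0) => h.
    - by rewrite nmulr_rgt0 // => h2; rewrite !ltr0_sg.
    - by rewrite pmulr_rgt0 // => h2; rewrite !gtr0_sg.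
    - by rewrite h mul0r ltxx.
  move: hxy; rewrite /adjA negb_and negbK negb_or !negbK.
  by case/orP => [/eqP -> // | /andP [/eqP -> /eqP ->]].
split.
  move=> i j hne hcl; apply: P2; apply: (@clique_adj _ _ A _ i j hcl) => //; [exact: set21 | exact: set22].
split; last first.
  move=> i j hij; apply/eqP => h; move: (nz i j hij); by rewrite h mul0r ltxx.
move=> i j k hij hjk hik hcl.
set s := [set i; j; k].
have hc : #|s| = 3%N.
  by rewrite /s setUC cardsU1 cards2 hij !inE (eq_sym k i) (eq_sym k j) (negbTE hik) (negbTE hjk).
have hc2 : (#|s| == 2)%N || (#|s| == 3)%N by rewrite hc.
have := hdet s hcl hc2; rewrite /principal_submx.
have [x0 [x1 [x2 [h01 h12 h02 ->]]]] := @det_sub3 _ _ A _ (@enum_val _ (mem s)) hc.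
move=> hd.
have hu := enum_valP x0; have hv := enum_valP x1; have hw := enum_valP x2.
have ne : forall a b : 'I_#|s|, a != b -> enum_val a != enum_val b :> 'I_n.
  by move=> a b hab; apply: contra hab => /eqP /enum_val_inj ->.
have huv := ne _ _ h01; have hvw := ne _ _ h12; have huw := ne _ _ h02.
have hwu : enum_val x2 != enum_val x0 :> 'I_n by rewrite eq_sym.
have adj := @clique_adj _ _ A _ _ _ hcl.
have [H1 H2] := @tri _ _ _ _ _ _ _ _ _ _ (esym (P2 _ _ (adj _ _ hu hv huv))) (esym (P2 _ _ (adj _ _ hv hw hvw)))
   (esym (P2 _ _ (adj _ _ hw hu hwu))) hd.
exact: (@final3 _ _ A _ _ _ i j k huv hvw huw hu hv hw H1 H2).
Qed.
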